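(* Let $\{\psi_j\}_{j=1}^N$ be an orthonormal system in $\ell^2(\mathbb Z)$. Then $$\sum_{n\in\mathbb Z}\Big(\sum_{j=1}^N|\psi_j(n)|^2\Big)^3\le\sum_{j=1}^N\sum_{n\in\mathbb Z}|D\psi_j(n)|^2,$$ where $D\psi(n)=\psi(n+1)-\psi(n)$. *)

(* Defs.v *)
From HB Require Import structures.
From mathcomp Require Import all_boot all_order all_algebra.
From mathcomp Require Import all_classical all_reals all_analysis.
From mathcomp Require Import complex.
Set Implicit Arguments. Unset Strict Implicit. Unset Printing Implicit Defensive.
Import Order.TTheory GRing.Theory Num.Theory numFieldNormedType.Exports.
Local Open Scope ring_scope.
Local Open Scope classical_set_scope.

Definition sqmod (R : realType) (z : R[i]) : R :=
  (complex.Re z) ^+ 2 + (complex.Im z) ^+ 2.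

(* symmetric partial sums  \sum_{n=-M}^{M} f n  over the integers *)
Definition zpsum (R : realType) (f : int -> R) (M : nat) : R :=
  \sum_(0 <= i < (M.*2).+1) f (i%:Z - M%:Z).

Definition in_l2 (R : realType) (f : int -> R[i]) : Prop :=
  (\esum_(n in [set: int]) ((sqmod (f n))%:E) < +oo)%E.

(* complex inner product <f, g> = sum_n f(n) conj(g(n)) equals the complex
   number c; for f, g in l^2 the series converges absolutely, we take the
   limit of symmetric partial sums of real and imaginary parts. *)
Definition inner_is (R : realType) (f g : int -> R[i]) (c : R[i]) : Prop :=
  (zpsum (fun n => complex.Re (f n * (g n)^*)%C) @ \oo --> (complex.Re c : R)) /\
  (zpsum (fun n => complex.Im (f n * (g n)^*)%C) @ \oo --> (complex.Im c : R)).

Definition orthonormal_l2Z (R : realType) (N : nat) (psi : 'I_N -> int -> R[i]) : Prop :=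
  (forall j, in_l2 (psi j)) /\
  (forall j k, inner_is (psi j) (psi k) (if j == k then 1 else 0)).

Definition Dz (R : realType) (f : int -> R[i]) (n : int) : R[i] := f (n + 1) - f n.

(* Main.v *)
Require Import Defs.
From HB Require Import structures.
From mathcomp Require Import all_boot all_order all_algebra.
From mathcomp Require Import all_classical all_reals all_analysis.
From mathcomp Require Import complex.
From mathcomp Require Import ring lra zify.
Import Order.TTheory GRing.Theory Num.Theory numFieldNormedType.Exports.
Local Open Scope ring_scope.
Local Open Scope classical_set_scope.

Lemma sqmod_ge0 (R : realType) (z : R[i]) : 0 <= sqmod z.
Proof. by rewrite /sqmod addr_ge0 // sqr_ge0. Qed.

Lemma cReD (R : realType) (x y : R[i]) : complex.Re (x + y) = complex.Re x + complex.Re y.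
Proof. by case: x; case: y. Qed.
Lemma cImD (R : realType) (x y : R[i]) : complex.Im (x + y) = complex.Im x + complex.Im y.
Proof. by case: x; case: y. Qed.
Lemma cReB (R : realType) (x y : R[i]) : complex.Re (x - y) = complex.Re x - complex.Re y.
Proof. by case: x; case: y. Qed.
Lemma cImB (R : realType) (x y : R[i]) : complex.Im (x - y) = complex.Im x - complex.Im y.
Proof. by case: x; case: y. Qed.
Lemma cReM (R : realType) (x y : R[i]) :
  complex.Re (x * y) = complex.Re x * complex.Re y - complex.Im x * complex.Im y.
Proof. by case: x; case: y. Qed.
Lemma cImM (R : realType) (x y : R[i]) :
  complex.Im (x * y) = complex.Re x * complex.Im y + complex.Im x * complex.Re y.
Proof. by case: x => a b; case: y => c d /=; ring. Qed.
Lemma cReJ (R : realType) (x : R[i]) : complex.Re (Num.conj x) = complex.Re x.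
Proof. by case: x. Qed.
Lemma cImJ (R : realType) (x : R[i]) : complex.Im (Num.conj x) = - complex.Im x.
Proof. by case: x. Qed.
Lemma cRe_sum (R : realType) (I : Type) (r : seq I) (P : pred I) (F : I -> R[i]) :
  complex.Re (\sum_(i <- r | P i) F i) = \sum_(i <- r | P i) complex.Re (F i).
Proof. by apply: (big_morph _ (@cReD R)). Qed.
Lemma cIm_sum (R : realType) (I : Type) (r : seq I) (P : pred I) (F : I -> R[i]) :
  complex.Im (\sum_(i <- r | P i) F i) = \sum_(i <- r | P i) complex.Im (F i).
Proof. by apply: (big_morph _ (@cImD R)). Qed.
Lemma cconj_sum (R : realType) (I : Type) (r : seq I) (P : pred I) (F : I -> R[i]) :
  Num.conj (\sum_(i <- r | P i) F i) = \sum_(i <- r | P i) Num.conj (F i).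
Proof. exact: rmorph_sum. Qed.
Lemma conjM' (R : realType) (x y : R[i]) : Num.conj (x * y) = Num.conj x * Num.conj y.
Proof. exact: rmorphM. Qed.
Lemma conjK' (R : realType) (x : R[i]) : Num.conj (Num.conj x) = x.
Proof. exact: conjCK. Qed.
Lemma sqmodE (R : realType) (z : R[i]) : sqmod z = complex.Re (z * Num.conj z).
Proof. rewrite cReM cReJ cImJ /sqmod; ring. Qed.
Lemma sqmodJ (R : realType) (z : R[i]) : sqmod (Num.conj z) = sqmod z.
Proof. by rewrite /sqmod cReJ cImJ sqrrN. Qed.
Lemma sqmod_diff (R : realType) (z w : R[i]) : sqmod z - sqmod w =
  (complex.Re z - complex.Re w) * (complex.Re z + complex.Re w) +
  (complex.Im z - complex.Im w) * (complex.Im z + complex.Im w).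
Proof. rewrite /sqmod; ring. Qed.
Lemma sqmod_add_le (R : realType) (z w : R[i]) : sqmod (z + w) <= 2 * (sqmod z + sqmod w).
Proof.
rewrite /sqmod cReD cImD.
set a := complex.Re z; set b := complex.Im z; set c := complex.Re w; set d := complex.Im w.
have := sqr_ge0 (a - c); have := sqr_ge0 (b - d); nra.
Qed.
Lemma sqmod_real (R : realType) (r : R) : sqmod (r%:C)%C = r ^+ 2.
Proof. by rewrite /sqmod /= expr0n /= addr0. Qed.

Definition rg (a : int) (L : nat) : seq int := [seq a + i%:Z | i <- iota 0 L].

Lemma rg_uniq a L : uniq (rg a L).
Proof. rewrite map_inj_uniq ?iota_uniq // => i j /addrI; by case. Qed.

Lemma mem_rg a L x : (x \in rg a L) = (a <= x) && (x < a + L%:Z).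
Proof.
apply/mapP/andP; [case=> i | case=> h1 h2].
  rewrite mem_iota add0n => /andP[_ hi] ->; split; lia.
exists `|x - a|%N; last by rewrite gez0_abs; lia.
rewrite mem_iota add0n /=; lia.
Qed.

Lemma sum_rg (R : realType) a L (f : int -> R) :
  \sum_(x <- rg a L) f x = \sum_(i < L) f (a + i%:Z).
Proof. by rewrite big_map -[RHS](big_mkord xpredT (fun i => f (a + i%:Z))) /index_iota subn0. Qed.

Lemma zpsum_rg (R : realType) (f : int -> R) M :
  zpsum f M = \sum_(x <- rg (- M%:Z) (M.*2).+1) f x.
Proof. by rewrite /zpsum big_map /index_iota subn0; apply: eq_bigr => i _; rewrite addrC. Qed.

Lemma le_sum_sub (R : realType) (s t : seq int) (f : int -> R) :
  uniq s -> uniq t -> {subset s <= t} -> (forall x, 0 <= f x) ->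
  \sum_(x <- s) f x <= \sum_(x <- t) f x.
Proof.
move=> us ut st f0.
rewrite [X in _ <= X](bigID (mem s)) /=.
set A := (X in X + _); set B := (X in _ + X).
have B0 : 0 <= B by exact: sumr_ge0.
suff -> : \sum_(x <- s) f x = A by rewrite lerDl.
rewrite /A; clear A B B0.
rewrite -big_filter; apply/esym/perm_big.
apply: uniq_perm => //; first exact: filter_uniq.
move=> x; rewrite mem_filter; apply/andP/idP => [[]//|h]; split => //; exact: st.
Qed.

Lemma zpsum_sum (R : realType) (N : nat) (F : 'I_N -> int -> R) M :
  zpsum (fun n => \sum_(j < N) F j n) M = \sum_(j < N) zpsum (F j) M.
Proof. by rewrite /zpsum exchange_big. Qed.
Lemma zpsumB (R : realType) (f g : int -> R) M :
  zpsum (fun n => f n - g n) M = zpsum f M - zpsum g M.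
Proof. by rewrite /zpsum sumrB. Qed.
Lemma zpsumZ (R : realType) (a : R) (f : int -> R) M :
  zpsum (fun n => a * f n) M = a * zpsum f M.
Proof. by rewrite /zpsum mulr_sumr. Qed.

Lemma sqmod_lin (R : realType) (N : nat) (c : 'I_N -> R[i]) (psi : 'I_N -> int -> R[i]) n :
  sqmod (\sum_(j < N) c j * psi j n) =
  \sum_(j < N) \sum_(k < N)
    (complex.Re (c j * (c k)^*)%C * complex.Re (psi j n * (psi k n)^*)%C -
     complex.Im (c j * (c k)^*)%C * complex.Im (psi j n * (psi k n)^*)%C).
Proof.
rewrite sqmodE cconj_sum mulr_suml cRe_sum; apply: eq_bigr => j _.
rewrite mulr_sumr cRe_sum; apply: eq_bigr => k _.
rewrite conjM' mulrACA; exact: cReM.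
Qed.

Lemma rg_sub a L b K : b <= a -> a + L%:Z <= b + K%:Z -> {subset rg a L <= rg b K}.
Proof. move=> h1 h2 x; rewrite !mem_rg => /andP[]; move=> *; apply/andP; split; lia. Qed.

Lemma cvg_sumseq (R : realType) (I : Type) (r : seq I) (f : I -> nat -> R) (l : I -> R) :
  (forall j, f j @ \oo --> (l j : R)) ->
  (fun n => \sum_(j <- r) f j n) @ \oo --> (\sum_(j <- r) l j : R).
Proof.
move=> h; elim: r => [|a r IH].
  rewrite big_nil; under eq_fun do rewrite big_nil; exact: cvg_cst.
rewrite big_cons; under eq_fun do rewrite big_cons.
exact: cvgD.
Qed.

Lemma cvg_lin2 (R : realType) (f g : nat -> R) (a b lf lg : R) :
  f @ \oo --> lf -> g @ \oo --> lg ->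
  (fun n => a * f n - b * g n) @ \oo --> a * lf - b * lg.
Proof.
move=> hf hg.
have hf' : (fun n => a * f n) @ \oo --> a * lf by apply: cvgMl_tmp.
have hg' : (fun n => b * g n) @ \oo --> b * lg by apply: cvgMl_tmp.
exact: (cvgB hf' hg').
Qed.

Lemma bessel_zp (R : realType) (N : nat) (psi : 'I_N -> int -> R[i])
  (Hon : orthonormal_l2Z psi) (c : 'I_N -> R[i]) M :
  zpsum (fun n => sqmod (\sum_(j < N) c j * psi j n)) M <= \sum_(j < N) sqmod (c j).
Proof.
case: Hon => _ Hin.
set u := fun M => zpsum (fun n => sqmod (\sum_(j < N) c j * psi j n)) M.
have ueq : forall M, u M = \sum_(j < N) \sum_(k < N)
    (complex.Re (c j * (c k)^*)%C * zpsum (fun n => complex.Re (psi j n * (psi k n)^*)%C) M -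
     complex.Im (c j * (c k)^*)%C * zpsum (fun n => complex.Im (psi j n * (psi k n)^*)%C) M).
  move=> M'; rewrite /u.
  under eq_fun do rewrite sqmod_lin.
  rewrite zpsum_sum; apply: eq_bigr => j _.
  rewrite zpsum_sum; apply: eq_bigr => k _.
  by rewrite zpsumB !zpsumZ.
have ucvg : u @ \oo --> (\sum_(j < N) \sum_(k < N)
    (complex.Re (c j * (c k)^*)%C * complex.Re ((if j == k then 1 else 0) : R[i]) -
     complex.Im (c j * (c k)^*)%C * complex.Im ((if j == k then 1 else 0) : R[i])) : R).
  rewrite (_ : u = fun M => \sum_(j < N) \sum_(k < N)
    (complex.Re (c j * (c k)^*)%C * zpsum (fun n => complex.Re (psi j n * (psi k n)^*)%C) M -
     complex.Im (c j * (c k)^*)%C * zpsum (fun n => complex.Im (psi j n * (psi k n)^*)%C) M)).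
    2: by apply/funext => M'; rewrite ueq.
  apply: cvg_sumseq => j; apply: cvg_sumseq => k. have [h1 h2] := Hin j k.
  exact: cvg_lin2.
have lE : \sum_(j < N) \sum_(k < N)
    (complex.Re (c j * (c k)^*)%C * complex.Re ((if j == k then 1 else 0) : R[i]) -
     complex.Im (c j * (c k)^*)%C * complex.Im ((if j == k then 1 else 0) : R[i]))
   = \sum_(j < N) sqmod (c j).
  apply: eq_bigr => j _; rewrite (bigD1 j) //= eqxx big1 ?addr0.
    by rewrite sqmodE mulr1 mulr0 subr0.
  by move=> k /negbTE; rewrite eq_sym => ->; rewrite /= !mulr0 subr0.
rewrite -lE -(cvg_lim _ ucvg) //.
apply: nondecreasing_cvgn_le; last by apply/cvg_ex; eexists; exact: ucvg.
move=> m n mn; rewrite /u !zpsum_rg; apply: le_sum_sub; rewrite ?rg_uniq //.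
  apply: rg_sub; lia.
by move=> x; exact: sqmod_ge0.
Qed.

Lemma CS (R : realType) (L : nat) (A B C D : nat -> R) :
  (\sum_(0 <= i < L) (A i * C i + B i * D i))^+2 <=
  (\sum_(0 <= i < L) (A i ^+ 2 + B i ^+ 2)) * (\sum_(0 <= i < L) (C i ^+ 2 + D i ^+ 2)).
Proof.
set Q := \sum_(0 <= i < L) (A i * C i + B i * D i).
set P := \sum_(0 <= i < L) (A i ^+ 2 + B i ^+ 2).
set S := \sum_(0 <= i < L) (C i ^+ 2 + D i ^+ 2).
have key : forall t, 0 <= t ^+ 2 * P - 2 * t * Q + S.
  move=> t.
  have -> : t ^+ 2 * P - 2 * t * Q + S =
      \sum_(0 <= i < L) ((t * A i - C i) ^+ 2 + (t * B i - D i) ^+ 2).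
    rewrite /P /Q /S !mulr_sumr -sumrB -big_split /=.
    by apply: eq_bigr => i _; ring.
  by apply: sumr_ge0 => i _; rewrite addr_ge0 // sqr_ge0.
have P0 : 0 <= P by apply: sumr_ge0 => i _; rewrite addr_ge0 // sqr_ge0.
have S0 : 0 <= S by apply: sumr_ge0 => i _; rewrite addr_ge0 // sqr_ge0.
case: (eqVneq P 0) => [Pe|Pn].
  case: (eqVneq Q 0) => [->|Qn]; first by rewrite Pe expr0n /= mul0r.
  have := key ((S + 1) / (2 * Q)).
  rewrite Pe mulr0 add0r.
  have -> : 2 * ((S + 1) / (2 * Q)) * Q = S + 1 by field.
  lra.
have Pp : 0 < P by rewrite lt_def Pn P0.
have := key (Q / P).
have -> : (Q / P) ^+ 2 * P - 2 * (Q / P) * Q + S = (P * S - Q ^+ 2) / P by field.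
by rewrite pmulr_lge0 ?invr_gt0 // subr_ge0.
Qed.

Lemma pigeon (R : realType) (K : nat) (f : nat -> R) : (0 < K)%N ->
  exists2 i, (i < K)%N & K%:R * f i <= \sum_(0 <= j < K) f j.
Proof.
move=> K0; case: (pselect (exists2 i, (i < K)%N & K%:R * f i <= \sum_(0 <= j < K) f j)) => // H.
exfalso.
have H' : forall i, (i < K)%N -> \sum_(0 <= j < K) f j < K%:R * f i.
  move=> i iK; rewrite ltNge; apply/negP => hle; apply: H; by exists i.
rewrite big_mkord in H'.
have hh : \sum_(i <- index_enum 'I_K) (\sum_(j < K) f j) < \sum_(i <- index_enum 'I_K) K%:R * f i.
  apply: ltr_sum.
    by apply/hasP; exists (Ordinal K0) => //; rewrite mem_index_enum.
  move=> i _; exact: H'.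
move: hh; rewrite -mulr_sumr.
have -> : \sum_(i <- index_enum 'I_K) (\sum_(j < K) f j) = K%:R * \sum_(j < K) f j.
  by rewrite big_const card_ord iter_addr addr0 mulr_natl.
by rewrite ltxx.
Qed.

Lemma bessel_seq (R : realType) (N : nat) (psi : 'I_N -> int -> R[i])
  (Hon : orthonormal_l2Z psi) (c : 'I_N -> R[i]) (s : seq int) : uniq s ->
  \sum_(m <- s) sqmod (\sum_(j < N) c j * psi j m) <= \sum_(j < N) sqmod (c j).
Proof.
move=> us; set M := (\sum_(x <- s) absz x)%N.
apply: le_trans; last exact: (@bessel_zp R N psi Hon c M).
rewrite zpsum_rg.
apply: le_sum_sub => //; [exact: rg_uniq | | move=> x; exact: sqmod_ge0].
move=> x xs; rewrite mem_rg.
have : (absz x <= M)%N by rewrite /M (bigD1_seq x) //= leq_addr.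
lia.
Qed.
Lemma arith (R : realType) (r SD SS e0 eL X k : R) : 0 <= r -> r <= 1 -> 0 < k ->
  e0 <= r * k -> eL <= r * k -> X = 2 * r ^+ 2 - e0 - eL -> X ^+ 2 <= SD * SS ->
  0 <= SD -> SS <= 4 * r -> r ^+ 3 <= SD + 2 * k.
Proof.
move=> r0 r1 k0 he0 heL hX hCS SD0 hSS.
case: (lerP r k) => hrk.
  have : r ^+ 3 <= r by rewrite !exprS expr0 mulr1; nra.
  lra.
have rp : 0 < r by lra.
have X0 : 2 * r * (r - k) <= X by rewrite hX; lra.
have X1 : 0 < 2 * r * (r - k) by nra.
have X2 : (2 * r * (r - k)) ^+ 2 <= X ^+ 2.
  by rewrite ler_pXn2r // ?nnegrE; lra.
have h4 : SD * SS <= SD * (4 * r) by rewrite ler_wpM2l.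
have h5 : r * (r * (r - k) ^+ 2) <= r * SD.
  have : (2 * r * (r - k)) ^+ 2 <= SD * (4 * r) by apply: le_trans X2 _; apply: le_trans hCS h4.
  move=> h; nra.
have h6 : r * (r - k) ^+ 2 <= SD by rewrite -(ler_pM2l rp).
have e : r * (r - k) ^+ 2 = r ^+ 3 - 2 * r ^+ 2 * k + r * k ^+ 2 by ring.
have rk : 0 <= r * k ^+ 2 by rewrite mulr_ge0 // sqr_ge0.
have : r ^+ 3 - 2 * r ^+ 2 * k <= SD by lra.
have : r ^+ 2 <= 1 by rewrite expr2; nra.
move=> h7; have : r ^+ 2 * k <= k by rewrite -[X in _ <= X]mul1r ler_pM2r.
lra.
Qed.

Lemma pointwise (R : realType) (phi : int -> R[i]) (r : R) (n : int) (K : nat) :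
  (0 < K)%N -> 0 <= r ->
  (forall s, uniq s -> \sum_(m <- s) sqmod (phi m) <= r) ->
  sqmod (phi n) = r ^+ 2 ->
  exists p q : nat, [/\ (0 < p <= K)%N, (0 < q <= K)%N &
    r ^+ 3 <= \sum_(0 <= i < p + q) sqmod (Dz phi (n - p%:Z + i%:Z)) + 2 * K%:R^-1].
Proof.
move=> K0 r0 Hb Hn.
have r1 : r <= 1.
  have := Hb [:: n] isT; rewrite big_seq1 Hn expr2 => h; nra.
have Hrg : forall a L, \sum_(0 <= j < L) sqmod (phi (a + j%:Z)) <= r.
  by move=> a L; have := Hb (rg a L) (rg_uniq _ _); rewrite sum_rg big_mkord.
have [i iK hi] := @pigeon R K (fun i => sqmod (phi (n - K%:Z + i%:Z))) K0.
have [i' iK' hi'] := @pigeon R K (fun i => sqmod (phi (n + 1 + i%:Z))) K0.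
exists (K - i)%N, i'.+1.
split; [lia|lia|].
set p := (K - i)%N; set q := i'.+1.
set a := n - p%:Z.
pose G := fun k : nat => sqmod (phi (a + k%:Z)).
have Gp : G p = r ^+ 2 by rewrite /G /a subrK.
have Kp : 0 < K%:R :> R by rewrite ltr0n.
have G0 : G 0%N <= r * K%:R^-1.
  rewrite ler_pdivlMr // mulrC /G.
  have -> : a + 0%:Z = n - K%:Z + i%:Z by rewrite /a /p; lia.
  apply: le_trans hi _; exact: Hrg.
have GL : G (p + q)%N <= r * K%:R^-1.
  rewrite ler_pdivlMr // mulrC /G.
  have -> : a + (p + q)%N%:Z = n + 1 + i'%:Z by rewrite /a /p /q; lia.
  apply: le_trans hi' _; exact: Hrg.
pose x := fun k : nat => complex.Re (Dz phi (a + k%:Z)).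
pose y := fun k : nat => complex.Im (Dz phi (a + k%:Z)).
pose u := fun k : nat => complex.Re (phi (a + k.+1%:Z) + phi (a + k%:Z)).
pose v := fun k : nat => complex.Im (phi (a + k.+1%:Z) + phi (a + k%:Z)).
pose sg := fun k : nat => if (k < p)%N then 1 else -1 : R.
have T : forall k, G k.+1 - G k = x k * u k + y k * v k.
  move=> k; rewrite /G /x /y /u /v /Dz sqmod_diff cReB cImB cReD cImD.
  by have -> : a + k%:Z + 1 = a + k.+1%:Z by lia.
have X : 2 * r ^+ 2 - G 0%N - G (p + q)%N =
    \sum_(0 <= k < p + q) (x k * (sg k * u k) + y k * (sg k * v k)).
  rewrite (@big_cat_nat _ _ _ p 0 (p + q) _ _ (leq0n p) (leq_addr q p)) /=.
  rewrite (@eq_big_nat _ _ _ 0 p _ (fun k => G k.+1 - G k)); last first.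
    by move=> k /andP[_ kp]; rewrite T /sg kp !mul1r.
  rewrite (@eq_big_nat _ _ _ p (p + q) _ (fun k => - (G k.+1 - G k))); last first.
    by move=> k /andP[pk _]; rewrite T /sg ltnNge pk /=; ring.
  rewrite sumrN !telescope_sumr ?leq_addr //; rewrite -Gp; ring.
have hCS := @CS R (p + q) x y (fun k => sg k * u k) (fun k => sg k * v k).
rewrite -X in hCS.
have SSeq : \sum_(0 <= k < p + q) ((sg k * u k) ^+ 2 + (sg k * v k) ^+ 2) =
    \sum_(0 <= k < p + q) sqmod (phi (a + k.+1%:Z) + phi (a + k%:Z)).
  apply: eq_bigr => k _; rewrite /sqmod /u /v !exprMn.
  have -> : sg k ^+ 2 = 1 by rewrite /sg; case: ifP => _; rewrite ?expr1n ?sqrrN ?expr1n.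
  by rewrite !mul1r.
have SS4 : \sum_(0 <= k < p + q) sqmod (phi (a + k.+1%:Z) + phi (a + k%:Z)) <= 4 * r.
  apply: le_trans.
    apply: (@ler_sum _ _ _ _ _ (fun k => 2 * (sqmod (phi (a + k.+1%:Z)) + sqmod (phi (a + k%:Z))))).
    by move=> k _; exact: sqmod_add_le.
  rewrite -mulr_sumr big_split /=.
  have h1 := Hrg a (p + q)%N.
  have h2 := Hrg (a + 1) (p + q)%N.
  have -> : \sum_(0 <= k < p + q) sqmod (phi (a + k.+1%:Z)) =
            \sum_(0 <= j < p + q) sqmod (phi (a + 1 + j%:Z)).
    by apply: eq_bigr => k _; congr (sqmod (phi _)); lia.
  lra.
have SD0 : 0 <= \sum_(0 <= k < p + q) (x k ^+ 2 + y k ^+ 2).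
  by apply: sumr_ge0 => k _; rewrite addr_ge0 // sqr_ge0.
have SDeq : \sum_(0 <= k < p + q) (x k ^+ 2 + y k ^+ 2) =
    \sum_(0 <= i0 < p + q) sqmod (Dz phi (n - p%:Z + i0%:Z)) by [].
rewrite -SDeq.
apply: (@arith R r _ _ _ _ _ _ r0 r1 _ G0 GL erefl hCS SD0); first by rewrite invr_gt0.
by rewrite SSeq.
Qed.

Lemma conj_mul_self (R : realType) (z : R[i]) : Num.conj z * z = ((sqmod z)%:C)%C.
Proof. by case: z => a b; apply/eqP; rewrite eq_complex /sqmod /=; apply/andP; split; apply/eqP; ring. Qed.

Lemma phi_nn (R : realType) (N : nat) (psi : 'I_N -> int -> R[i]) n :
  sqmod (\sum_(j < N) Num.conj (psi j n) * psi j n) = (\sum_(j < N) sqmod (psi j n)) ^+ 2.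
Proof.
under eq_bigr do rewrite conj_mul_self.
by rewrite -(raddf_sum (real_complex R)) sqmod_real.
Qed.

Lemma Dz_phi (R : realType) (N : nat) (psi : 'I_N -> int -> R[i]) n m :
  Dz (fun m => \sum_(j < N) Num.conj (psi j n) * psi j m) m =
  \sum_(j < N) Num.conj (psi j n) * Dz (psi j) m.
Proof. by rewrite /Dz -sumrB; apply: eq_bigr => j _; rewrite mulrBr. Qed.

Lemma bessel_D (R : realType) (N : nat) (psi : 'I_N -> int -> R[i])
  (Hon : orthonormal_l2Z psi) (d : 'I_N -> R[i]) (s : seq int) : uniq s ->
  \sum_(n <- s) sqmod (\sum_(j < N) Num.conj (psi j n) * d j) <= \sum_(j < N) sqmod (d j).
Proof.
move=> us.
have -> : \sum_(n <- s) sqmod (\sum_(j < N) Num.conj (psi j n) * d j) =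
          \sum_(n <- s) sqmod (\sum_(j < N) Num.conj (d j) * psi j n).
  apply: eq_bigr => n _; rewrite -sqmodJ cconj_sum; congr sqmod.
  by apply: eq_bigr => j _; rewrite conjM' conjK' mulrC.
apply: le_trans; first exact: (@bessel_seq R N psi Hon (fun j => Num.conj (d j)) s us).
by under eq_bigr do rewrite sqmodJ.
Qed.

Lemma finite_bound (R : realType) (N : nat) (psi : 'I_N -> int -> R[i])
  (Hon : orthonormal_l2Z psi) (s : seq int) (K : nat) : uniq s -> (0 < K)%N ->
  exists2 W : seq int, uniq W &
  \sum_(n <- s) (\sum_(j < N) sqmod (psi j n)) ^+ 3 <=
  \sum_(j < N) \sum_(m <- W) sqmod (Dz (psi j) m) + (2 * K%:R^-1) *+ size s.
Proof.
move=> us K0.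
set M := (\sum_(x <- s) absz x + K)%N.
exists (rg (- M%:Z) (M.*2).+1); first exact: rg_uniq.
set W := rg _ _.
set phi := fun n m => \sum_(j < N) Num.conj (psi j n) * psi j m.
have step : forall n, n \in s -> (\sum_(j < N) sqmod (psi j n)) ^+ 3 <=
    \sum_(m <- W) sqmod (Dz (phi n) m) + 2 * K%:R^-1.
  move=> n ns.
  have Hb : forall t, uniq t -> \sum_(m <- t) sqmod (phi n m) <= \sum_(j < N) sqmod (psi j n).
    move=> t ut; have h := @bessel_seq R N psi Hon (fun j => Num.conj (psi j n)) t ut.
    apply: le_trans h _; by under eq_bigr do rewrite sqmodJ.
  have r0 : 0 <= \sum_(j < N) sqmod (psi j n) by apply: sumr_ge0 => j _; exact: sqmod_ge0.
  have [p [q [hp hq hpt]]] := @pointwise R (phi n) _ n K K0 r0 Hb (@phi_nn R N psi n).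
  apply: le_trans hpt _; rewrite lerD2r.
  have -> : \sum_(0 <= i < p + q) sqmod (Dz (phi n) (n - p%:Z + i%:Z)) =
      \sum_(m <- rg (n - p%:Z) (p + q)) sqmod (Dz (phi n) m) by rewrite sum_rg big_mkord.
  apply: le_sum_sub; [exact: rg_uniq|exact: rg_uniq| |move=> x; exact: sqmod_ge0].
  have : (absz n <= \sum_(x <- s) absz x)%N by rewrite (bigD1_seq n) //= leq_addr.
  move=> hn; apply: rg_sub; rewrite /M; lia.
have h1 : \sum_(n <- s) (\sum_(j < N) sqmod (psi j n)) ^+ 3 <=
    \sum_(n <- s) (\sum_(m <- W) sqmod (Dz (phi n) m) + 2 * K%:R^-1).
  rewrite big_seq [X in _ <= X]big_seq; apply: ler_sum => n ns; exact: step.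
apply: le_trans h1 _.
rewrite big_split /= big_const_seq count_predT iter_addr addr0 lerD2r.
rewrite exchange_big /= [X in _ <= X]exchange_big /=; apply: ler_sum => m _.
under eq_bigr do rewrite Dz_phi.
exact: bessel_D.
Qed.

Theorem lemma2p2 (R : realType) (N : nat) (psi : 'I_N -> int -> R[i]) :
  orthonormal_l2Z psi ->
  (\esum_(n in [set: int]) (((\sum_(j < N) sqmod (psi j n)) ^+ 3)%:E)
   <= \sum_(j < N) \esum_(n in [set: int]) ((sqmod (Dz (psi j) n))%:E))%E.
Proof.
move=> Hon.
set RHS := (\sum_(j < N) \esum_(n in [set: int]) ((sqmod (Dz (psi j) n))%:E))%E.
have key : forall s : seq int, uniq s ->
    ((\sum_(n <- s) (\sum_(j < N) sqmod (psi j n)) ^+ 3)%:E <= RHS)%E.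
  move=> s us; apply/lee_addgt0Pr => e e0.
  set c := 2 * (size s)%:R / e.
  have c0 : 0 <= c by rewrite /c divr_ge0 // ?mulr_ge0 // ltW.
  set K := (Num.Def.trunc c).+1.
  have K0 : (0 < K)%N by [].
  have [W uW hW] := @finite_bound R N psi Hon s K us K0.
  have cK : c < K%:R by rewrite -truncn_lt_nat.
  have Kp : 0 < K%:R :> R by rewrite ltr0n.
  have de : (2 * K%:R^-1) *+ size s <= e.
    have h2 : 2 * (size s)%:R < K%:R * e by move: cK; rewrite /c ltr_pdivrMr.
    rewrite -mulr_natr mulrAC ler_pdivrMr // [e * _]mulrC; exact: ltW.
  have hB : ((\sum_(j < N) \sum_(m <- W) sqmod (Dz (psi j) m))%:E <= RHS)%E.
    rewrite -sumEFin; apply: lee_sum => j _.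
    apply: esum_ge; exists [set` W].
      by split; [exact: finite_seq | done].
    by rewrite -fsbig_seq // sumEFin.
  have h3 := hW; rewrite -lee_fin in h3.
  apply: le_trans h3 _.
  rewrite EFinD; apply: leeD => //; by rewrite lee_fin.
apply: ge_ereal_sup => _ [X [finX _] <-] /=.
rewrite fsbig_finite //= sumEFin; apply: key; exact: finmap.fset_uniq.
Qed.
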